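(* Let $\mathbf A\in\mathbb R^{n\times p}$ have columns $\mathbf a_1,\dots,\mathbf a_p$ normalized to a common norm, $\|\mathbf a_k\|_2=c$ for $k=1,\dots,p$, and let $\mathbf y\in\mathbb R^n$. Let $\mathbf w$ be a weight vector as in the context and $\Delta:=\min\{w_l-w_{l+1}: l=1,\dots,p-1\}$. Let $\widehat{\mathbf x}$ be any minimizer of $$\frac12\|\mathbf A\mathbf x-\mathbf y\|_2^2+\Omega_{\mathbf w}(\mathbf x)$$ over $\mathbf x\in\mathbb R^p$. Then for every pair of columns $(i,j)$ for which $\|\mathbf y\|_2\,\|\operatorname{sign}(\widehat x_i)\mathbf a_i-\operatorname{sign}(\widehat x_j)\mathbf a_j\|_2<\Delta$, we have $|\widehat x_i|=|\widehat x_j|$.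
   Context: $\mathbf w=(w_1,\dots,w_p)\in\mathbb R^p_+$ satisfies $w_1\ge w_2\ge\cdots\ge w_p\ge0$ and $w_1>0$. The ordered weighted $\ell_1$ (OWL) norm is $\Omega_{\mathbf w}(\mathbf x)=\sum_{i=1}^p w_i|x|_{[i]}$, where $|x|_{[i]}$ denotes the $i$-th largest component of $\mathbf x$ in magnitude. $\operatorname{sign}$ denotes the sign function. *)

(* Defs.v *)
From HB Require Import structures.
From mathcomp Require Import all_boot all_order all_algebra.
Set Implicit Arguments. Unset Strict Implicit. Unset Printing Implicit Defensive.
Import Order.TTheory GRing.Theory Num.Theory.
Local Open Scope ring_scope.

Definition l2norm (R : rcfType) (m : nat) (v : 'cV[R]_m) : R :=
  Num.sqrt (\sum_(i < m) v i 0 ^+ 2).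

(* magnitudes of the entries of x, sorted in nonincreasing order:
   (sorted_abs x)`_i = |x|_[i+1] *)
Definition sorted_abs (R : rcfType) (m : nat) (x : 'cV[R]_m) : seq R :=
  sort (fun a b : R => b <= a) [seq `|x i 0| | i <- enum 'I_m].

Definition owl (R : rcfType) (m : nat) (w : 'I_m -> R) (x : 'cV[R]_m) : R :=
  \sum_(i < m) w i * (sorted_abs x)`_i.

Definition owl_obj (R : rcfType) (n m : nat) (A : 'M[R]_(n, m)) (y : 'cV[R]_n)
  (w : 'I_m -> R) (x : 'cV[R]_m) : R :=
  2^-1 * l2norm (A *m x - y) ^+ 2 + owl w x.

(* weights indexed by 'I_p.+1 (paper's p is p.+1 here).
   Delta = min_{l = 1..p} (w_l - w_{l+1}); the seed w_1 of the fold does not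
   change the value when p >= 1 since w_l - w_{l+1} <= w_1 - w_{p+1} <= w_1. *)
Definition owl_gap (R : rcfType) (p : nat) (w : 'I_p.+1 -> R) : R :=
  \big[Num.min/w ord0]_(l < p) (w (widen_ord (leqnSn p) l) - w (lift ord0 l)).

(* Main.v *)
Require Import Defs.
From mathcomp Require Import all_boot all_order all_algebra all_fingroup.
From mathcomp Require Import ring lra zify.
Import Order.TTheory GRing.Theory Num.Theory.
Set Implicit Arguments. Unset Strict Implicit. Unset Printing Implicit Defensive.
Local Open Scope ring_scope.

Lemma nth_map_enum (T : Type) m (f : 'I_m -> T) (x0 : T) (k : 'I_m) :
  nth x0 [seq f i | i <- enum 'I_m] k = f k.
Proof. by rewrite (nth_map k) ?size_enum_ord ?ltn_ord // nth_ord_enum. Qed.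

Lemma sorted_abs_perm (R : rcfType) m (x : 'cV[R]_m) :
  exists pi : 'S_m, forall k : 'I_m, (sorted_abs x)`_k = `|x (pi k) 0|.
Proof.
have hp : perm_eq (sorted_abs x) [tuple `|x i 0| | i < m].
  by rewrite /sorted_abs perm_sort /=.
case/tuple_permP: hp => pi ->; exists pi => k.
by rewrite -tnth_nth tnth_mktuple tnth_mktuple.
Qed.

Lemma size_sorted_abs (R : rcfType) m (x : 'cV[R]_m) : size (sorted_abs x) = m.
Proof. by rewrite /sorted_abs size_sort size_map size_enum_ord. Qed.

Lemma ge_total (R : rcfType) : total (fun a b : R => b <= a).
Proof. by move=> a b; rewrite orbC le_total. Qed.
Lemma ge_trans (R : rcfType) : transitive (fun a b : R => b <= a).
Proof. by move=> a b c /= h1 h2; apply: le_trans h2 h1. Qed.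
Lemma ge_anti (R : rcfType) : antisymmetric (fun a b : R => b <= a).
Proof. by move=> a b /andP[h1 h2]; apply/eqP; rewrite eq_le h1 h2. Qed.

Lemma sorted_abs_sorted (R : rcfType) m (x : 'cV[R]_m) :
  sorted (fun a b : R => b <= a) (sorted_abs x).
Proof. exact: (sort_sorted (@ge_total R)). Qed.

Lemma sorted_abs_le (R : rcfType) m (x : 'cV[R]_m) (k l : nat) :
  (k <= l)%N -> (l < m)%N -> (sorted_abs x)`_l <= (sorted_abs x)`_k.
Proof.
move=> hkl hl.
have := @sorted_leq_nth _ _ (@ge_trans R) (fun a => le_refl a) 0 _ (sorted_abs_sorted x) k l.
rewrite !inE size_sorted_abs => h; apply: h => //; exact: leq_ltn_trans hl.
Qed.

Lemma sorted_abs_eq (R : rcfType) m (x : 'cV[R]_m) (pi : 'S_m) :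
  sorted (fun a b : R => b <= a) [seq `|x (pi k) 0| | k <- enum 'I_m] ->
  sorted_abs x = [seq `|x (pi k) 0| | k <- enum 'I_m].
Proof.
move=> hs; rewrite /sorted_abs -[RHS](sorted_sort (@ge_trans R) hs).
apply/(perm_sortP (@ge_total R) (@ge_trans R) (@ge_anti R)).
rewrite perm_sym (map_comp (fun i => `|x i 0|) pi); apply: perm_map.
apply: uniq_perm; [rewrite map_inj_uniq ?enum_uniq //; exact: perm_inj|exact: enum_uniq|].
move=> i; rewrite mem_enum -[i](permKV pi) (map_f _ (mem_enum _ _)) //.
Qed.

Lemma sorted_abs_ge0 (R : rcfType) m (x : 'cV[R]_m) k : 0 <= (sorted_abs x)`_k.
Proof.
case: (ltnP k m) => hk; last by rewrite nth_default ?size_sorted_abs.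
have [pi hpi] := sorted_abs_perm x.
by rewrite -[k]/(nat_of_ord (Ordinal hk)) hpi.
Qed.

Lemma owl_ge0 (R : rcfType) m (w : 'I_m -> R) (x : 'cV[R]_m) :
  (forall i, 0 <= w i) -> 0 <= owl w x.
Proof. by move=> hw; apply: sumr_ge0 => i _; apply: mulr_ge0 => //; apply: sorted_abs_ge0. Qed.

Lemma owl0 (R : rcfType) m (w : 'I_m -> R) : owl w (0 : 'cV[R]_m) = 0.
Proof.
apply: big1 => i _.
have [pi hpi] := sorted_abs_perm (0 : 'cV[R]_m).
by rewrite hpi mxE normr0 mulr0.
Qed.
Lemma tf_sorted (R : rcfType) (s : seq R) m (ri rj : nat) (a b e : R) :
  (forall k l, (k <= l)%N -> (l < m)%N -> s`_l <= s`_k) ->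
  (ri < rj)%N -> (rj < m)%N -> s`_ri = a -> s`_rj = b ->
  0 <= e -> e + e <= a - b -> e <= a - s`_ri.+1 -> e <= s`_rj.-1 - b ->
  forall k, (k.+1 < m)%N ->
   (if k.+1 == ri then a - e else if k.+1 == rj then b + e else s`_k.+1)
   <= (if k == ri then a - e else if k == rj then b + e else s`_k).
Proof.
move=> hs hij hjm ha hb he0 he1 he2 he3 k hk.
have hkm : (k < m)%N by apply: ltnW.
case: (eqVneq k ri) => [->|hki].
  rewrite eqn_leq ltnn /=.
  case: (eqVneq ri.+1 rj) => [_|_]; first lra.
  lra.
case: (eqVneq k rj) => [hkj|hkj].
  subst k.
  have -> : (rj.+1 == ri) = false by lia.
  rewrite eqn_leq ltnn /=.
  have := hs rj rj.+1 (leqnSn _) hk; rewrite hb; lra.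
case: (eqVneq k.+1 ri) => [hk1|hk1].
  have := hs k ri; rewrite -hk1 leqnSn hk => /(_ isT isT); rewrite hk1 ha; lra.
case: (eqVneq k.+1 rj) => [hk1j|hk1j].
  move: he3; rewrite -hk1j /=; lra.
exact: hs (leqnSn _) hk.
Qed.
Definition sq (R : rcfType) n (v : 'cV[R]_n) := \sum_(k < n) v k 0 ^+ 2.
Definition dot (R : rcfType) n (u v : 'cV[R]_n) := \sum_(k < n) u k 0 * v k 0.

Lemma sq_ge0 (R : rcfType) n (v : 'cV[R]_n) : 0 <= sq v.
Proof. by apply: sumr_ge0 => k _; apply: sqr_ge0. Qed.

Lemma l2norm_sq (R : rcfType) n (v : 'cV[R]_n) : l2norm v ^+ 2 = sq v.
Proof. by rewrite /l2norm sqr_sqrtr // sq_ge0. Qed.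

Lemma l2norm_ge0 (R : rcfType) n (v : 'cV[R]_n) : 0 <= l2norm v.
Proof. exact: sqrtr_ge0. Qed.

Lemma CS (R : rcfType) n (u v : 'cV[R]_n) : `|dot u v| <= l2norm u * l2norm v.
Proof.
have hP : dot u v ^+ 2 <= sq u * sq v.
  have [hV|hV] := eqVneq (sq v) 0.
    have hv : forall k, v k 0 = 0.
      move=> k; have := psumr_eq0P (fun k _ => sqr_ge0 (v k 0)) hV (i:=k) isT.
      by move/eqP; rewrite sqrf_eq0 => /eqP.
    rewrite hV mulr0 /dot big1 ?expr0n // => k _; by rewrite hv mulr0.
  set V := sq v; set P := dot u v; set U := sq u.
  have heq : \sum_(k < n) (V * u k 0 - P * v k 0) ^+ 2 =
      V ^+ 2 * U - (2 * V * P) * P + P ^+ 2 * V.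
    rewrite (eq_bigr (fun k => V ^+ 2 * (u k 0 ^+ 2) - (2 * V * P) * (u k 0 * v k 0)
       + P ^+ 2 * (v k 0 ^+ 2))); last by move=> k _; ring.
    by rewrite big_split big_split /= sumrN -!mulr_sumr.
  have h0 : 0 <= V * (U * V - P ^+ 2).
    have : 0 <= \sum_(k < n) (V * u k 0 - P * v k 0) ^+ 2.
      by apply: sumr_ge0 => k _; apply: sqr_ge0.
    rewrite heq; congr (_ <= _); ring.
  have hVp : 0 < sq v by rewrite lt_def hV sq_ge0.
  by rewrite -subr_ge0 -(pmulr_rge0 _ hVp).
rewrite /l2norm -sqrtrM ?sq_ge0 // -sqrtr_sqr.
exact: ler_wsqrtr.
Qed.

Lemma tperm_abs (R : rcfType) m (x : 'cV[R]_m) (u v z : 'I_m) :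
  `|x u 0| = `|x v 0| -> `|x (tperm u v z) 0| = `|x z 0|.
Proof. by move=> h; case: tpermP => [->|->|] //. Qed.

Lemma lra_aux (R : rcfType) (P K D W e ND : R) : P <= K -> D <= W ->
  e * ND <= D - K - e -> 0 < e -> 0 < D - K -> P + e * ND / 2 - W < 0.
Proof. move=> *; lra. Qed.

Lemma aux2 (R : rcfType) (G O P e ND wi wj : R) :
 2^-1*G + O <= 2^-1*(G + 2*e*P + e^+2*ND) + (O - e*wi + e*wj) ->
 e*(P + e*ND/2 - (wi - wj)) < 0 -> False.
Proof. move=> h1 h2. nra. Qed.

Lemma sq_add (R : rcfType) n (u v : 'cV[R]_n) (e : R) :
  sq (u + e *: v) = sq u + 2 * e * dot u v + e ^+ 2 * sq v.
Proof.
rewrite /sq /dot (eq_bigr (fun k => u k 0 ^+ 2 + (2 * e) * (u k 0 * v k 0)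
   + e ^+ 2 * (v k 0 ^+ 2))); last by move=> k _; rewrite !mxE; ring.
by rewrite !big_split /= -!mulr_sumr.
Qed.

Lemma key (R : rcfType) (n p : nat) (A : 'M[R]_(n, p.+1)) (y : 'cV[R]_n)
  (w : 'I_p.+1 -> R)
  (hw_mono : forall i j : 'I_p.+1, (i <= j)%N -> w j <= w i)
  (hw_nneg : forall i : 'I_p.+1, 0 <= w i)
  (x : 'cV[R]_p.+1)
  (hmin : forall x' : 'cV[R]_p.+1, owl_obj A y w x <= owl_obj A y w x')
  (i j : 'I_p.+1) :
  `|x j 0| < `|x i 0| ->
  l2norm y * l2norm (Num.sg (x i 0) *: col i A - Num.sg (x j 0) *: col j A)
      < owl_gap w -> False.
Proof.
move=> hab hK.
set a := `|x i 0|; set b := `|x j 0|.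
have hba : b < a by [].
have hb0 : 0 <= b by apply: normr_ge0.
have ha0 : 0 < a by apply: le_lt_trans hab.
have hij : i != j by apply/eqP => e; move: hab; rewrite /a /b e ltxx.
set si := Num.sg (x i 0); set sj := Num.sg (x j 0).
set V := si *: col i A - sj *: col j A.
set K := l2norm y * l2norm V.
set Delta := owl_gap w.
set g := A *m x - y.
have hobj : forall x', owl_obj A y w x' = 2^-1 * sq (A *m x' - y) + owl w x'.
  by move=> x'; rewrite /owl_obj l2norm_sq.
have hgy : l2norm g <= l2norm y.
  have := hmin 0; rewrite !hobj owl0 mulmx0 sub0r addr0.
  have -> : sq (- y) = sq y by apply: eq_bigr => k _; rewrite mxE sqrrN.
  have := owl_ge0 x hw_nneg => h1 h2.
  apply: ler_wsqrtr; rewrite -/(sq g) -/(sq y); lra.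
set Q := dot g (col j A).
set s := if x j 0 == 0 then (if 0 <= Q then -1 else 1) else sj.
have hsQ : (s - sj) * Q <= 0.
  rewrite /s /sj; case: eqP => [->|_]; last by rewrite subrr mul0r.
  rewrite sgr0 subr0; case: ifP => hQ; first by rewrite mulN1r oppr_le0.
  by rewrite mul1r; apply: ltW; rewrite ltNge hQ.
set d : 'cV[R]_p.+1 := (- si) *: delta_mx i 0 + s *: delta_mx j 0.
set D := A *m d.
have hD : D = (- si) *: col i A + s *: col j A.
  by rewrite /D /d mulmxDr -!scalemxAr -!colE.
set P := dot g D.
have hPK : P <= K.
  have -> : P = - dot g V + (s - sj) * Q.
    rewrite /P hD /dot /Q /V mulr_sumr -sumrN -big_split /=.
    by apply: eq_bigr => k _; rewrite !mxE; ring.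
  have h1 : - dot g V <= `|dot g V| by rewrite -normrN ler_norm.
  have h2 := CS g V.
  have h3 : l2norm g * l2norm V <= K by apply: ler_wpM2r => //; apply: l2norm_ge0.
  lra.
have [pi hpi] := sorted_abs_perm x.
set s0 := sorted_abs x.
have hsort : forall k l, (k <= l)%N -> (l < p.+1)%N -> s0`_l <= s0`_k.
  by move=> k l; apply: sorted_abs_le.
have hki : s0`_(pi^-1 i)%g == a by rewrite hpi permKV.
have hkj : s0`_(pi^-1 j)%g == b by rewrite hpi permKV.
have [ri hri hmax] : exists2 ri : 'I_p.+1, s0`_ri == a &
    forall k : 'I_p.+1, s0`_k == a -> (k <= ri)%N.
  by case: (@arg_maxnP _ (pi^-1 i)%g (fun k : 'I_p.+1 => s0`_k == a) (fun k : 'I_p.+1 => nat_of_ord k) hki) => r h1 h2; exists r.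
have [rj hrj hmin'] : exists2 rj : 'I_p.+1, s0`_rj == b &
    forall k : 'I_p.+1, s0`_k == b -> (rj <= k)%N.
  by case: (@arg_minnP _ (pi^-1 j)%g (fun k : 'I_p.+1 => s0`_k == b) (fun k : 'I_p.+1 => nat_of_ord k) hkj) => r h1 h2; exists r.
move/eqP: hri => hri; move/eqP: hrj => hrj.
have hrij : (ri < rj)%N.
  rewrite ltnNge; apply/negP => hle.
  have := hsort _ _ hle (ltn_ord ri); rewrite hri hrj => h; lra.
have hai : s0`_ri.+1 < a.
  case: (ltnP ri.+1 p.+1) => hr.
    have hle := hsort _ _ (leqnSn ri) hr; rewrite hri in hle.
    rewrite lt_def hle andbT; apply/eqP => heq.
    have := hmax (Ordinal hr); rewrite /= heq eqxx ltnn => /(_ isT); done.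
  by rewrite nth_default // size_sorted_abs.
have hbj : b < s0`_rj.-1.
  have hr0 : (0 < rj)%N by apply: leq_ltn_trans hrij.
  have hr : (rj.-1 < p.+1)%N by apply: leq_ltn_trans (leq_pred _) (ltn_ord rj).
  have hle := hsort _ _ (leq_pred rj) (ltn_ord rj); rewrite hrj in hle.
  rewrite lt_def hle andbT; apply/eqP => heq.
  have := hmin' (Ordinal hr); rewrite /= -heq eqxx => /(_ isT).
  by rewrite leqNgt prednK // leqnn.
set p1 := (pi * tperm i (pi ri))%g.
set p2 := (p1 * tperm j (p1 rj))%g.
have hp1 : forall k, `|x (p1 k) 0| = `|x (pi k) 0|.
  by move=> k; rewrite permM; apply: tperm_abs; rewrite -hpi hri.
have hp2 : forall k, `|x (p2 k) 0| = s0`_k.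
  move=> k; rewrite permM tperm_abs; first by rewrite hp1 -hpi.
  by rewrite hp1 -hpi hrj.
have hrij' : ri != rj by rewrite neq_ltn hrij.
have hp2i : p2 ri = i.
  have hp1ri : p1 ri = i by rewrite permM tpermR.
  rewrite permM hp1ri tpermD //; first by rewrite eq_sym.
  apply/eqP => e; move: hrij'; rewrite -hp1ri in e.
  by rewrite (perm_inj e) eqxx.
have hp2j : p2 rj = j by rewrite permM tpermR.
have hp2o : forall k, k != ri -> k != rj -> (p2 k != i) && (p2 k != j).
  move=> k h1 h2; apply/andP; split; apply/eqP => e.
    by move: h1; rewrite -hp2i in e; rewrite (perm_inj e) eqxx.
  by move: h2; rewrite -hp2j in e; rewrite (perm_inj e) eqxx.
set ND := sq D.
have hND : 0 <= ND by apply: sq_ge0.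
have hDK : 0 < Delta - K by rewrite subr_gt0.
set e := Num.min (Num.min ((a - b) / 2) (a - s0`_ri.+1))
                 (Num.min (s0`_rj.-1 - b) ((Delta - K) / (ND + 1))).
have he0 : 0 < e.
  rewrite !lt_min !divr_gt0 ?subr_gt0 ?hba ?hai ?hbj //; lra.
have he1 : e <= (a - b) / 2 by rewrite !ge_min lexx.
have he2 : e <= a - s0`_ri.+1 by rewrite !ge_min lexx !orbT.
have he3 : e <= s0`_rj.-1 - b by rewrite !ge_min lexx !orbT.
have he4 : e * (ND + 1) <= Delta - K.
  by rewrite -ler_pdivlMr ?ltr_wpDl // /e !ge_min lexx !orbT.
set xt := x + e *: d.
have hxt : forall k, xt k 0 = x k 0 + e * (- si * (k == i)%:R + s * (k == j)%:R).
  by move=> k; rewrite !mxE eqxx !andbT.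
have hsi2 : si * si = 1.
  have : x i 0 != 0 by rewrite -normr_gt0.
  by move=> h; rewrite /si -expr2 sqr_sg h.
have hxti : `|xt i 0| = a - e.
  rewrite hxt eqxx (negbTE hij) mulr0 addr0 mulr1 {1}(numEsg (x i 0)) -/si -/a.
  have -> : si * a + e * - si = si * (a - e) by ring.
  rewrite normrM (@ger0_norm _ (a - e)); last by lra.
  have : x i 0 != 0 by rewrite -normr_gt0.
  by rewrite /si normr_sg => ->; rewrite mul1r.
have hxtj : `|xt j 0| = b + e.
  rewrite hxt eqxx eq_sym (negbTE hij) mulr0 add0r mulr1.
  rewrite /s; case: eqP => [hx0|/eqP hx0].
    have -> : b = 0 by rewrite /b hx0 normr0.
    rewrite hx0 !add0r normrM (@ger0_norm _ e); last exact: ltW.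
    by case: ifP => _; rewrite ?normrN normr1 mulr1.
  rewrite {1}(numEsg (x j 0)) -/sj -/b.
  have -> : sj * b + e * sj = sj * (b + e) by ring.
  rewrite normrM (@ger0_norm _ (b + e)); last by lra.
  by rewrite /sj normr_sg hx0 mul1r.
have hxto : forall k, k != i -> k != j -> xt k 0 = x k 0.
  by move=> k h1 h2; rewrite hxt (negbTE h1) (negbTE h2) !mulr0 addr0 mulr0 addr0.
set tf := fun k : nat => if k == ri then a - e else if k == rj then b + e else s0`_k.
have hrjri : (nat_of_ord rj == nat_of_ord ri) = false.
  by apply/negbTE; rewrite neq_ltn hrij orbT.
have ht : forall ko : 'I_p.+1, `|xt (p2 ko) 0| = tf ko.
  move=> ko; rewrite /tf.
  case: (eqVneq ko ri) => [->|h1]; first by rewrite eqxx hp2i hxti.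
  have h1' : (nat_of_ord ko == nat_of_ord ri) = false := negbTE h1.
  rewrite h1'.
  case: (eqVneq ko rj) => [->|h2]; first by rewrite eqxx hp2j hxtj.
  have h2' : (nat_of_ord ko == nat_of_ord rj) = false := negbTE h2.
  rewrite h2'.
  have /andP[h3 h4] := hp2o ko h1 h2.
  by rewrite hxto // hp2.
have hxts : sorted_abs xt = [seq `|xt (p2 k) 0| | k <- enum 'I_p.+1].
  apply: sorted_abs_eq; apply/(sortedP 0).
  rewrite size_map size_enum_ord => k hk.
  have hk0 : (k < p.+1)%N by apply: ltnW.
  rewrite -[k]/(nat_of_ord (Ordinal hk0)) -[k.+1]/(nat_of_ord (Ordinal hk)).
  rewrite !nth_map_enum !ht /=.
  apply: (tf_sorted hsort hrij (ltn_ord rj) hri hrj (ltW he0) _ he2 he3 hk).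
  lra.
have howl : owl w xt = owl w x - e * w ri + e * w rj.
  have E1 : owl w xt = \sum_(k < p.+1) w k * tf k.
    by rewrite /owl hxts; apply: eq_bigr => k _; rewrite nth_map_enum ht.
  suff : owl w xt - owl w x = e * w rj - e * w ri by move=> h; lra.
  rewrite E1 /owl -/s0 -sumrB (bigD1 ri) //= (bigD1 rj) /=; last by rewrite eq_sym.
  rewrite big1; last first.
    move=> k /andP[h1 h2]; rewrite /tf.
    have h1' : (nat_of_ord k == nat_of_ord ri) = false := negbTE h1.
    have h2' : (nat_of_ord k == nat_of_ord rj) = false := negbTE h2.
    by rewrite h1' h2' subrr.
  rewrite /tf eqxx hrjri eqxx hri hrj; ring.
have hAxt : A *m xt - y = g + e *: D.
  by rewrite /xt /g /D mulmxDr -scalemxAr addrAC.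
have hfin := hmin xt.
rewrite !hobj hAxt sq_add howl -/g in hfin.
have hW : Delta <= w ri - w rj.
  have hri_p : (ri < p)%N by rewrite -ltnS; apply: leq_ltn_trans hrij (ltn_ord rj).
  have := bigmin_le (w ord0) (Ordinal hri_p)
     (fun l => w (widen_ord (leqnSn p) l) - w (lift ord0 l)).
  rewrite -/(owl_gap w) -/Delta.
  have -> : widen_ord (leqnSn p) (Ordinal hri_p) = ri by apply: val_inj.
  have := hw_mono (lift ord0 (Ordinal hri_p)) rj; rewrite lift0 /= hrij => /(_ isT).
  move=> h1 h2; lra.
set W := w ri - w rj.
have hP2 : dot g D = P by [].
rewrite hP2 in hfin.
have hneg : P + e * ND / 2 - W < 0.
  have : e * ND <= Delta - K - e by move: he4; rewrite mulrDr mulr1; lra.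
  move=> h; exact: (lra_aux hPK hW h he0 hDK).
have : e * (P + e * ND / 2 - W) < 0 by rewrite pmulr_rlt0.
exact: aux2 hfin.
Qed.

Lemma l2norm_opp (R : rcfType) n (v : 'cV[R]_n) : l2norm (- v) = l2norm v.
Proof. by rewrite /l2norm; congr Num.sqrt; apply: eq_bigr => k _; rewrite mxE sqrrN. Qed.

Unset Implicit Arguments.

Theorem theorem2 (R : rcfType) (n p : nat) (A : 'M[R]_(n, p.+1)) (y : 'cV[R]_n)
  (c : R) (hcol : forall k : 'I_p.+1, l2norm (col k A) = c)
  (w : 'I_p.+1 -> R)
  (hw_mono : forall i j : 'I_p.+1, (i <= j)%N -> w j <= w i)
  (hw_nneg : forall i : 'I_p.+1, 0 <= w i)
  (hw_pos : 0 < w ord0)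
  (xhat : 'cV[R]_p.+1)
  (hmin : forall x : 'cV[R]_p.+1, owl_obj A y w xhat <= owl_obj A y w x) :
  forall i j : 'I_p.+1,
    l2norm y * l2norm (Num.sg (xhat i 0) *: col i A - Num.sg (xhat j 0) *: col j A)
      < owl_gap w ->
    `|xhat i 0| = `|xhat j 0|.
Proof.
move=> i j hK.
case: (ltgtP `|xhat i 0| `|xhat j 0|) => // h.
- exfalso; apply: (key hw_mono hw_nneg hmin h).
  by rewrite -opprB l2norm_opp.
- by exfalso; apply: (key hw_mono hw_nneg hmin h).
Qed.
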